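(* Let $v_0$ be a unit $K$-invariant vector of $V$ and define $v_\ell=\mathcal Z_\ell(v_{\ell-1})$ for $\ell\ge1$. Then for every $\ell\ge1$, $$v_\ell=a_\ell\tilde Hv_{\ell-1}+b_\ell v_{\ell-2},$$ where $a_\ell=-2\ell+1$, $b_\ell=(\ell-1)^2(\ell(\ell-2)-s(s-2))$, and $v_{-1}$ is understood as the zero vector.
   Context: Let $G=\mathrm{PSL}_2(\mathbb C)$, $K=\mathrm{PSU}(2)$, $\mathfrak g=\mathfrak{sl}_2(\mathbb C)$ as a real Lie algebra and $\mathfrak g_{\mathbb C}=\mathfrak g\otimes_{\mathbb R}\mathbb C$, with $\mathbf i$ the imaginary unit of the complexification (distinct from the scalar $i$ inside matrices). With $H=\mathrm{diag}(1,-1)$, $E=\begin{pmatrix}0&1\\0&0\end{pmatrix}$, $F=\begin{pmatrix}0&0\\1&0\end{pmatrix}$, set $D=\tfrac{i}{2}H$, $X_1=\tfrac12(E-F)$, $X_2=\tfrac i2(E+F)$, $E^+=X_1-\mathbf iX_2$, $E^-=-X_1-\mathbf iX_2$, $\tilde H=\tfrac12H$, $Y_1=\tfrac12(E+F)$, $Y_2=\tfrac i2(E-F)$, $R=Y_1-\mathbf iY_2$, $L=-Y_1-\mathbf iY_2$, and $\mathcal Z_\ell=\tfrac12(RE^-+LE^+-2(\ell+1)\tilde H)$. $V=\mathcal H_s$, $1<s<2$, is the complementary series representation of $G$: the irreducible unitary representation with nonzero $K$-invariant vectors on whose smooth vectors the Casimir element $\mathcal C=\mathcal C_K+\tilde H^2-\tfrac12(RL+LR)$,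 with $\mathcal C_K=-D^2+\tfrac12(E^+E^-+E^-E^+)$, acts by the scalar $s(s-2)$; $\mathfrak g_{\mathbb C}$ and its enveloping algebra act on smooth vectors via the complex-linear extension of the derived representation. *)

(* Defs.v *)
From HB Require Import structures.
From mathcomp Require Import all_boot all_algebra complex reals.

Set Implicit Arguments.
Unset Strict Implicit.
Unset Printing Implicit Defensive.

Import GRing.Theory Num.Theory.
Local Open Scope ring_scope.

Section SL2C.
Variable R : realType.

(* The complex numbers; [ci] is the scalar i occurring inside matrices and also
   the scalar used for the complex structure of V. *)
Notation C := (R[i]).
Definition ci : C := Complex 0 1.
Definition rC (r : R) : C := Complex r 0.

(* Elements of g = sl_2(C), viewed as a real Lie algebra, are the traceless
   complex 2x2 matrices. *)
Definition mxH : 'M[C]_2 := \matrix_(i < 2, j < 2)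
  (if (i == j) then (if i == 0 then 1 else -1) else 0).
Definition mxE : 'M[C]_2 := \matrix_(i < 2, j < 2)
  (if (i == 0) && (j == 1) then 1 else 0).
Definition mxF : 'M[C]_2 := \matrix_(i < 2, j < 2)
  (if (i == 1) && (j == 0) then 1 else 0).

Definition elD  : 'M[C]_2 := (ci / 2) *: mxH.
Definition elX1 : 'M[C]_2 := (1 / 2) *: (mxE - mxF).
Definition elX2 : 'M[C]_2 := (ci / 2) *: (mxE + mxF).
Definition elHt : 'M[C]_2 := (1 / 2) *: mxH.
Definition elY1 : 'M[C]_2 := (1 / 2) *: (mxE + mxF).
Definition elY2 : 'M[C]_2 := (ci / 2) *: (mxE - mxF).

Definition traceless (X : 'M[C]_2) := \tr X = 0.

(* A unitary representation of the real Lie algebra g on a complex inner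
   product space V (playing the role of the smooth vectors of a unitary
   representation of G): [act X] is the derived action of X in g.
   - act X is complex linear in the vector;
   - X |-> act X is REAL linear on g;
   - brackets are preserved;
   - the inner product is a positive definite Hermitian form for which every
     act X (X in g) is skew-adjoint (unitarity). *)
Record unitary_g_module (V : lmodType C) := UnitaryGModule {
  act : 'M[C]_2 -> V -> V;
  inner : V -> V -> C;
  act_linear : forall X (a : C) (u v : V),
      act X (a *: u + v) = a *: act X u + act X v;
  act_real_linear : forall (r : R) (X Y : 'M[C]_2) (v : V),
      traceless X -> traceless Y ->
      act (rC r *: X + Y) v = rC r *: act X v + act Y v;
  act_bracket : forall (X Y : 'M[C]_2) (v : V),
      traceless X -> traceless Y ->
      act (X *m Y - Y *m X) v = act X (act Y v) - act Y (act X v);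
  inner_linear : forall (a : C) (u v w : V),
      inner (a *: u + v) w = a * inner u w + inner v w;
  inner_hermitian : forall u v : V, inner u v = conjc (inner v u);
  inner_posdef : forall v : V, v != 0 -> 0 < inner v v;
  act_skew : forall (X : 'M[C]_2) (u v : V),
      traceless X -> inner (act X u) v = - inner u (act X v)
}.

Variable V : lmodType C.
Variable M : unitary_g_module V.

(* Complex-linear extension to g_C = g (x)_R C: the element X + i Y
   (i the imaginary unit of the complexification) acts by
   act X + ci *: act Y. *)
Definition cact (X Y : 'M[C]_2) (v : V) : V := act M X v + ci *: act M Y v.

Definition opD  (v : V) : V := act M elD v.
Definition opHt (v : V) : V := act M elHt v.
Definition opEp (v : V) : V := cact elX1 (- elX2) v.        (* E^+ = X1 - iX2 *)
Definition opEm (v : V) : V := cact (- elX1) (- elX2) v.    (* E^- = -X1 - iX2 *)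
Definition opR  (v : V) : V := cact elY1 (- elY2) v.        (* R = Y1 - iY2 *)
Definition opL  (v : V) : V := cact (- elY1) (- elY2) v.    (* L = -Y1 - iY2 *)

Definition opZ (l : nat) (v : V) : V :=
  (1 / 2) *: (opR (opEm v) + opL (opEp v) - (2 * (l + 1))%:R *: opHt v).

Definition casimir (v : V) : V :=
  - opD (opD v) + (1 / 2) *: (opEp (opEm v) + opEm (opEp v))
  + opHt (opHt v) - (1 / 2) *: (opR (opL v) + opL (opR v)).

(* K-invariance of a smooth vector (K = PSU(2) connected): annihilated by
   k = su(2) = span_R(D, X1, X2). *)
Definition K_invariant (v : V) : Prop :=
  act M elD v = 0 /\ act M elX1 v = 0 /\ act M elX2 v = 0.

Fixpoint vseq (v0 : V) (n : nat) : V :=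
  match n with
  | 0 => v0
  | n'.+1 => opZ n' (vseq v0 n')
  end.

Definition vprev2 (v0 : V) (l : nat) : V :=
  if l is l'.+2 then vseq v0 l' else 0.

End SL2C.

(* Main.v *)
Require Import Defs.
From HB Require Import structures.
From mathcomp Require Import all_boot all_algebra complex reals ring.
Import GRing.Theory Num.Theory.
Local Open Scope ring_scope.

Section S.
Variable R : realType.
Local Notation C := R[i].

Lemma ord2_cases (i : 'I_2) : i = 0 \/ i = 1.
Proof. by case: i => [[|[|k]] H]; [left; exact: val_inj | right; exact: val_inj | ]. Qed.

Lemma mx2P (A B : 'M[C]_2) : A 0 0 = B 0 0 -> A 0 1 = B 0 1 -> A 1 0 = B 1 0 -> A 1 1 = B 1 1 -> A = B.
Proof.
move=> h1 h2 h3 h4; apply/matrixP => i j.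
case: (ord2_cases i) => ->; case: (ord2_cases j) => ->; [exact h1|exact h2|exact h3|exact h4].
Qed.

Definition m2 (a b c d : C) : 'M[C]_2 :=
  \matrix_(i < 2, j < 2) if i == 0 then (if j == 0 then a else b) else (if j == 0 then c else d).

Lemma m2E a b c d : [/\ m2 a b c d 0 0 = a, m2 a b c d 0 1 = b, m2 a b c d 1 0 = c & m2 a b c d 1 1 = d].
Proof. by rewrite !matrix.mxE. Qed.

Lemma mulE (A B : 'M[C]_2) i j : (A *m B) i j = A i 0 * B 0 j + A i 1 * B 1 j.
Proof.
rewrite matrix.mxE big_ord_recl big_ord1.
have -> : lift ord0 ord0 = 1 :> 'I_2 by apply: val_inj.
by have -> : ord0 = 0 :> 'I_2 by apply: val_inj.
Qed.

Lemma subE (A B : 'M[C]_2) i j : (A - B) i j = A i j - B i j.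
Proof. by rewrite !matrix.mxE. Qed.

Lemma m2_br a b c d e f g h :
  m2 a b c d *m m2 e f g h - m2 e f g h *m m2 a b c d =
  m2 (b * g - f * c) (a * f + b * h - e * b - f * d)
     (c * e + d * g - g * a - h * c) (c * f - g * b).
Proof.
case: (m2E a b c d) => k1 k2 k3 k4; case: (m2E e f g h) => k5 k6 k7 k8.
apply: mx2P; rewrite !subE !mulE ?k1 ?k2 ?k3 ?k4 ?k5 ?k6 ?k7 ?k8 !matrix.mxE /=; ring.
Qed.

Lemma m2_opp a b c d : - m2 a b c d = m2 (- a) (- b) (- c) (- d).
Proof. apply: mx2P; rewrite !matrix.mxE /=; ring. Qed.

Lemma m2_inj a b c d a' b' c' d' : a = a' -> b = b' -> c = c' -> d = d' -> m2 a b c d = m2 a' b' c' d'.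
Proof. by move=> -> -> -> ->. Qed.

Ltac basis := apply: mx2P; rewrite !matrix.mxE /=; ring.

Lemma mD : elD R = m2 (ci R / 2) 0 0 (- (ci R / 2)).
Proof. rewrite /elD /mxH; basis. Qed.
Lemma mX1 : elX1 R = m2 0 (1 / 2) (- (1 / 2)) 0.
Proof. rewrite /elX1 /Defs.mxE /mxF; basis. Qed.
Lemma mX2 : elX2 R = m2 0 (ci R / 2) (ci R / 2) 0.
Proof. rewrite /elX2 /Defs.mxE /mxF; basis. Qed.
Lemma mHt : elHt R = m2 (1 / 2) 0 0 (- (1 / 2)).
Proof. rewrite /elHt /mxH; basis. Qed.
Lemma mY1 : elY1 R = m2 0 (1 / 2) (1 / 2) 0.
Proof. rewrite /elY1 /Defs.mxE /mxF; basis. Qed.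
Lemma mY2 : elY2 R = m2 0 (ci R / 2) (- (ci R / 2)) 0.
Proof. rewrite /elY2 /Defs.mxE /mxF; basis. Qed.
Lemma m0 : (0 : 'M[C]_2) = m2 0 0 0 0.
Proof. apply: mx2P; rewrite !matrix.mxE /=; ring. Qed.

Ltac mxcomp := rewrite ?mD ?mX1 ?mX2 ?mHt ?mY1 ?mY2 ?m0 m2_br ?m2_opp; apply: m2_inj; field.

Lemma br_D_Ht : elD R *m elHt R - elHt R *m elD R = 0.
Proof. by mxcomp. Qed.
Lemma br_X1_Ht : elX1 R *m elHt R - elHt R *m elX1 R = - elY1 R.
Proof. by mxcomp. Qed.
Lemma br_X2_Ht : elX2 R *m elHt R - elHt R *m elX2 R = - elY2 R.
Proof. by mxcomp. Qed.
Lemma br_Ht_Y1 : elHt R *m elY1 R - elY1 R *m elHt R = elX1 R.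
Proof. by mxcomp. Qed.
Lemma br_Ht_Y2 : elHt R *m elY2 R - elY2 R *m elHt R = elX2 R.
Proof. by mxcomp. Qed.
Lemma br_X1_Y1 : elX1 R *m elY1 R - elY1 R *m elX1 R = elHt R.
Proof. by mxcomp. Qed.
Lemma br_X1_Y2 : elX1 R *m elY2 R - elY2 R *m elX1 R = 0.
Proof. by mxcomp. Qed.
Lemma br_X2_Y1 : elX2 R *m elY1 R - elY1 R *m elX2 R = 0.
Proof. by mxcomp. Qed.
Lemma ci2 : ci R * ci R = -1.
Proof. by rewrite -expr2 sqr_i. Qed.
Lemma br_X2_Y2 : elX2 R *m elY2 R - elY2 R *m elX2 R = elHt R.
Proof.
rewrite mX2 mY2 mHt m2_br; apply: m2_inj.
- transitivity (- (ci R * ci R) / 2); first by field.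
  by rewrite ci2; field.
- by ring.
- by ring.
- transitivity ((ci R * ci R) / 2); first by field.
  by rewrite ci2; field.
Qed.

Lemma tr_m2 a b c d : \tr (m2 a b c d) = a + d.
Proof. by rewrite /mxtrace big_ord_recl big_ord1 !matrix.mxE. Qed.
Ltac trc := rewrite /traceless ?mD ?mX1 ?mX2 ?mHt ?mY1 ?mY2 tr_m2; ring.
Lemma tr_D : traceless (elD R). Proof. by trc. Qed.
Lemma tr_X1 : traceless (elX1 R). Proof. by trc. Qed.
Lemma tr_X2 : traceless (elX2 R). Proof. by trc. Qed.
Lemma tr_Ht : traceless (elHt R). Proof. by trc. Qed.
Lemma tr_Y1 : traceless (elY1 R). Proof. by trc. Qed.
Lemma tr_Y2 : traceless (elY2 R). Proof. by trc. Qed.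
End S.

Set Implicit Arguments.
Unset Strict Implicit.
Section LC.
Variable R : realType.
Local Notation C := R[i].
Variable V : lmodType C.

Fact lc6_key : unit. Proof. exact: tt. Qed.
Definition lc6_def (e : V * V * V * V * V * V) (a b c d f g : C) : V :=
  a *: e.1.1.1.1.1 + b *: e.1.1.1.1.2 + c *: e.1.1.1.2 + d *: e.1.1.2 + f *: e.1.2 + g *: e.2.
Definition lc6 := locked_with lc6_key lc6_def.
Lemma lc6E : lc6 = lc6_def. Proof. exact: unlock. Qed.

Lemma lcA e : e.1.1.1.1.1 = lc6 e 1 0 0 0 0 0.
Proof. by rewrite lc6E /lc6_def !scale0r scale1r !addr0. Qed.
Lemma lcB e : e.1.1.1.1.2 = lc6 e 0 1 0 0 0 0.
Proof. by rewrite lc6E /lc6_def !scale0r scale1r add0r !addr0. Qed.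
Lemma lcC e : e.1.1.1.2 = lc6 e 0 0 1 0 0 0.
Proof. by rewrite lc6E /lc6_def !scale0r scale1r !add0r !addr0. Qed.
Lemma lcD e : e.1.1.2 = lc6 e 0 0 0 1 0 0.
Proof. by rewrite lc6E /lc6_def !scale0r scale1r !add0r !addr0. Qed.
Lemma lcE e : e.1.2 = lc6 e 0 0 0 0 1 0.
Proof. by rewrite lc6E /lc6_def !scale0r scale1r !add0r !addr0. Qed.
Lemma lcF e : e.2 = lc6 e 0 0 0 0 0 1.
Proof. by rewrite lc6E /lc6_def !scale0r scale1r !add0r. Qed.
Lemma lc0 e : (0 : V) = lc6 e 0 0 0 0 0 0.
Proof. by rewrite lc6E /lc6_def !scale0r !add0r. Qed.
Lemma lcAdd e a b c d f g a' b' c' d' f' g' :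
  lc6 e a b c d f g + lc6 e a' b' c' d' f' g' =
  lc6 e (a + a') (b + b') (c + c') (d + d') (f + f') (g + g').
Proof.
rewrite lc6E /lc6_def !scalerDl.
do 5! (rewrite addrACA; congr (_ + _)).
Qed.
Lemma lcOpp e a b c d f g : - lc6 e a b c d f g = lc6 e (- a) (- b) (- c) (- d) (- f) (- g).
Proof. by rewrite lc6E /lc6_def !opprD !scaleNr. Qed.
Lemma lcScale e k a b c d f g : k *: lc6 e a b c d f g =
  lc6 e (k * a) (k * b) (k * c) (k * d) (k * f) (k * g).
Proof. by rewrite lc6E /lc6_def !scalerDr !scalerA. Qed.
Lemma lcEq e a b c d f g a' b' c' d' f' g' : a = a' -> b = b' -> c = c' -> d = d' -> f = f' -> g = g' ->
  lc6 e a b c d f g = lc6 e a' b' c' d' f' g'.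
Proof. by move=> -> -> -> -> -> ->. Qed.
End LC.

Ltac coefsolve := first [ring | (field; done) ].

Ltac lcsolve6 t1 t2 t3 t4 t5 t6 :=
  let a1 := fresh "a" in let a2 := fresh "a" in let a3 := fresh "a" in
  let a4 := fresh "a" in let a5 := fresh "a" in let a6 := fresh "a" in let e := fresh "e" in
  set a1 := t1; set a2 := t2; set a3 := t3; set a4 := t4; set a5 := t5; set a6 := t6;
  clearbody a1 a2 a3 a4 a5 a6;
  pose e := (a1, a2, a3, a4, a5, a6);
  change a1 with e.1.1.1.1.1; change a2 with e.1.1.1.1.2; change a3 with e.1.1.1.2;
  change a4 with e.1.1.2; change a5 with e.1.2; change a6 with e.2;
  rewrite ?(lcA e) ?(lcB e) ?(lcC e) ?(lcD e) ?(lcE e) ?(lcF e) ?(lc0 e);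
  rewrite ?(lcAdd, lcOpp, lcScale);
  apply: lcEq; coefsolve.

Ltac lcsolve5 t1 t2 t3 t4 t5 := let T := type of t1 in let z := fresh "z" in
  pose z := (0 : T); lcsolve6 t1 t2 t3 t4 t5 z.


Ltac lcsolve4 t1 t2 t3 t4 := let T := type of t1 in let z := fresh "z" in
  pose z := (0 : T); lcsolve5 t1 t2 t3 t4 z.
Ltac lcsolve3 t1 t2 t3 := let T := type of t1 in let z := fresh "z" in
  pose z := (0 : T); lcsolve4 t1 t2 t3 z.
Ltac lcsolve2 t1 t2 := let T := type of t1 in let z := fresh "z" in
  pose z := (0 : T); lcsolve3 t1 t2 z.

Section Ops.
Variable R : realType.
Local Notation C := R[i].
Variable V : lmodType C.
Variable M : unitary_g_module V.

Definition lin (f : V -> V) := forall (a : C) u v, f (a *: u + v) = a *: f u + f v.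
Lemma lin0 f : lin f -> f 0 = 0.
Proof.
move=> Hf; have H := Hf 1 0 0; rewrite !scale1r addr0 in H.
by apply: (@addrI _ (f 0)); rewrite addr0 -H.
Qed.
Lemma linD f : lin f -> forall u v, f (u + v) = f u + f v.
Proof. by move=> Hf u v; have := Hf 1 u v; rewrite !scale1r. Qed.
Lemma linZ f : lin f -> forall a u, f (a *: u) = a *: f u.
Proof. by move=> Hf a u; have := Hf a u 0; rewrite !addr0 (lin0 Hf) addr0. Qed.
Lemma linN f : lin f -> forall u, f (- u) = - f u.
Proof. by move=> Hf u; rewrite -scaleN1r (linZ Hf) scaleN1r. Qed.
Lemma linB f : lin f -> forall u v, f (u - v) = f u - f v.
Proof. by move=> Hf u v; rewrite (linD Hf) (linN Hf). Qed.

Lemma lin_act X : lin (act M X).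
Proof. exact: act_linear. Qed.

Lemma tr0 : traceless (0 : 'M[C]_2).
Proof. by rewrite /traceless mxtrace0. Qed.

Lemma rCE (r : R) : rC r = (r%:C)%C.
Proof. by []. Qed.

Lemma act0 v : act M 0 v = 0.
Proof.
have H := @act_real_linear _ _ M 1 0 0 v tr0 tr0.
rewrite scaler0 addr0 rCE rmorph1 !scale1r in H.
by apply: (@addrI _ (act M 0 v)); rewrite addr0 -H.
Qed.

Lemma actN X v : traceless X -> act M (- X) v = - act M X v.
Proof.
move=> hX; have H := @act_real_linear _ _ M (-1) X 0 v hX tr0.
by rewrite addr0 act0 addr0 rCE rmorphN1 !scaleN1r in H.
Qed.

Lemma brk X Y Z v : X *m Y - Y *m X = Z -> traceless X -> traceless Y ->
  act M X (act M Y v) = act M Y (act M X v) + act M Z v.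
Proof. by move=> <- hX hY; rewrite act_bracket // subrKC. Qed.

Variables eD eX1 eX2 eHt eY1 eY2 : 'M[C]_2.
Hypotheses (tD : traceless eD) (tX1 : traceless eX1) (tX2 : traceless eX2)
  (tHt : traceless eHt) (tY1 : traceless eY1) (tY2 : traceless eY2).
Hypotheses (h1 : eD *m eHt - eHt *m eD = 0)
  (h2 : eX1 *m eHt - eHt *m eX1 = - eY1)
  (h3 : eX2 *m eHt - eHt *m eX2 = - eY2)
  (h4 : eHt *m eY1 - eY1 *m eHt = eX1)
  (h5 : eHt *m eY2 - eY2 *m eHt = eX2)
  (h6 : eX1 *m eY1 - eY1 *m eX1 = eHt)
  (h7 : eX1 *m eY2 - eY2 *m eX1 = 0)
  (h8 : eX2 *m eY1 - eY1 *m eX2 = 0)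
  (h9 : eX2 *m eY2 - eY2 *m eX2 = eHt).

Local Notation ci := (ci R).
Local Notation d := (act M eD).
Local Notation x1 := (act M eX1).
Local Notation x2 := (act M eX2).
Local Notation h := (act M eHt).
Local Notation y1 := (act M eY1).
Local Notation y2 := (act M eY2).
Fact ep_key : unit. Proof. exact: tt. Qed.
Definition ep := locked_with ep_key (fun v => act M eX1 v + ci *: act M (- eX2) v).
Lemma epU v : ep v = act M eX1 v + ci *: act M (- eX2) v. Proof. by rewrite [ep]unlock. Qed.
Fact em_key : unit. Proof. exact: tt. Qed.
Definition em := locked_with em_key (fun v => act M (- eX1) v + ci *: act M (- eX2) v).
Lemma emU v : em v = act M (- eX1) v + ci *: act M (- eX2) v. Proof. by rewrite [em]unlock. Qed.
Fact r_key : unit. Proof. exact: tt. Qed.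
Definition r := locked_with r_key (fun v => act M eY1 v + ci *: act M (- eY2) v).
Lemma rU v : r v = act M eY1 v + ci *: act M (- eY2) v. Proof. by rewrite [r]unlock. Qed.
Fact l_key : unit. Proof. exact: tt. Qed.
Definition l := locked_with l_key (fun v => act M (- eY1) v + ci *: act M (- eY2) v).
Lemma lU v : l v = act M (- eY1) v + ci *: act M (- eY2) v. Proof. by rewrite [l]unlock. Qed.

Lemma b1 v : d (h v) = h (d v).
Proof. by rewrite (brk _ h1 tD tHt) act0 addr0. Qed.
Lemma b2 v : x1 (h v) = h (x1 v) - y1 v.
Proof. by rewrite (brk _ h2 tX1 tHt) (actN _ tY1). Qed.
Lemma b3 v : x2 (h v) = h (x2 v) - y2 v.
Proof. by rewrite (brk _ h3 tX2 tHt) (actN _ tY2). Qed.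
Lemma b4 v : h (y1 v) = y1 (h v) + x1 v.
Proof. by rewrite (brk _ h4 tHt tY1). Qed.
Lemma b5 v : h (y2 v) = y2 (h v) + x2 v.
Proof. by rewrite (brk _ h5 tHt tY2). Qed.
Lemma b6 v : x1 (y1 v) = y1 (x1 v) + h v.
Proof. by rewrite (brk _ h6 tX1 tY1). Qed.
Lemma b7 v : x1 (y2 v) = y2 (x1 v).
Proof. by rewrite (brk _ h7 tX1 tY2) act0 addr0. Qed.
Lemma b8 v : x2 (y1 v) = y1 (x2 v).
Proof. by rewrite (brk _ h8 tX2 tY1) act0 addr0. Qed.
Lemma b9 v : x2 (y2 v) = y2 (x2 v) + h v.
Proof. by rewrite (brk _ h9 tX2 tY2). Qed.

Lemma epE v : ep v = x1 v - ci *: x2 v.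
Proof. by rewrite epU (actN _ tX2) scalerN. Qed.
Lemma emE v : em v = - x1 v - ci *: x2 v.
Proof. by rewrite emU (actN _ tX1) (actN _ tX2) scalerN. Qed.
Lemma rE v : r v = y1 v - ci *: y2 v.
Proof. by rewrite rU (actN _ tY2) scalerN. Qed.
Lemma lE v : l v = - y1 v - ci *: y2 v.
Proof. by rewrite lU (actN _ tY1) (actN _ tY2) scalerN. Qed.

Ltac pushlin := rewrite ?(linD (lin_act _), linN (lin_act _), linZ (lin_act _), lin0 (lin_act _)).

Lemma lin_ep : lin ep.
Proof. move=> a u v; rewrite !epE; pushlin. lcsolve4 (x1 u) (x2 u) (x1 v) (x2 v). Qed.
Lemma lin_em : lin em.
Proof. move=> a u v; rewrite !emE; pushlin. lcsolve4 (x1 u) (x2 u) (x1 v) (x2 v). Qed.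
Lemma lin_r : lin r.
Proof. move=> a u v; rewrite !rE; pushlin. lcsolve4 (y1 u) (y2 u) (y1 v) (y2 v). Qed.
Lemma lin_l : lin l.
Proof. move=> a u v; rewrite !lE; pushlin. lcsolve4 (y1 u) (y2 u) (y1 v) (y2 v). Qed.

Lemma c1 v : ep (h v) = h (ep v) - r v.
Proof. rewrite !epE rE b2 b3; pushlin. lcsolve4 (h (x1 v)) (h (x2 v)) (y1 v) (y2 v). Qed.
Lemma c2 v : em (h v) = h (em v) - l v.
Proof. rewrite !emE lE b2 b3; pushlin. lcsolve4 (h (x1 v)) (h (x2 v)) (y1 v) (y2 v). Qed.
Lemma c3 v : h (r v) = r (h v) + ep v.
Proof. rewrite !rE epE; pushlin; rewrite b4 b5. lcsolve4 (y1 (h v)) (y2 (h v)) (x1 v) (x2 v). Qed.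
Lemma c4 v : h (l v) = l (h v) + em v.
Proof. rewrite !lE emE; pushlin; rewrite b4 b5. lcsolve4 (y1 (h v)) (y2 (h v)) (x1 v) (x2 v). Qed.


Lemma c5 v : ep (l v) = l (ep v) - 2 *: h v.
Proof.
rewrite epE !lE epE; pushlin; rewrite b6 b7 b8 b9.
rewrite ?(scalerDr, scalerBr, scalerN, scaleNr, opprK, scalerA) ?(ci2 R).
lcsolve5 (y1 (x1 v)) (y2 (x1 v)) (y1 (x2 v)) (y2 (x2 v)) (h v).
Qed.
Lemma c6 v : em (r v) = r (em v) - 2 *: h v.
Proof.
rewrite emE !rE emE; pushlin; rewrite b6 b7 b8 b9.
rewrite ?(scalerDr, scalerBr, scalerN, scaleNr, opprK, scalerA) ?(ci2 R).
lcsolve5 (y1 (x1 v)) (y2 (x1 v)) (y1 (x2 v)) (y2 (x2 v)) (h v).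
Qed.

Lemma lin_h : lin h. Proof. exact: lin_act. Qed.
Lemma lin_d : lin d. Proof. exact: lin_act. Qed.

Lemma c3' v : r (h v) = h (r v) - ep v.
Proof. by rewrite c3 addrK. Qed.
Lemma c4' v : l (h v) = h (l v) - em v.
Proof. by rewrite c4 addrK. Qed.

Fact Qo_key : unit. Proof. exact: tt. Qed.
Definition Qo := locked_with Qo_key (fun v => ep (em v) + em (ep v)).
Lemma QoU v : Qo v = ep (em v) + em (ep v). Proof. by rewrite [Qo]unlock. Qed.
Fact Wo_key : unit. Proof. exact: tt. Qed.
Definition Wo := locked_with Wo_key (fun v => r (em v) + l (ep v)).
Lemma WoU v : Wo v = r (em v) + l (ep v). Proof. by rewrite [Wo]unlock. Qed.
Fact Po_key : unit. Proof. exact: tt. Qed.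
Definition Po := locked_with Po_key (fun v => r (l v) + l (r v)).
Lemma PoU v : Po v = r (l v) + l (r v). Proof. by rewrite [Po]unlock. Qed.

Lemma lin_comp f g : lin f -> lin g -> lin (fun v => f (g v)).
Proof. by move=> Hf Hg a u v; rewrite Hg Hf. Qed.
Lemma lin_add f g : lin f -> lin g -> lin (fun v => f v + g v).
Proof. move=> Hf Hg a u v; rewrite Hf Hg. lcsolve4 (f u) (g u) (f v) (g v). Qed.

Lemma lin_Q : lin Qo.
Proof. move=> a u v; rewrite !QoU; exact: (lin_add (lin_comp lin_ep lin_em) (lin_comp lin_em lin_ep)). Qed.
Lemma lin_W : lin Wo.
Proof. move=> a u v; rewrite !WoU; exact: (lin_add (lin_comp lin_r lin_em) (lin_comp lin_l lin_ep)). Qed.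

Ltac pushall := rewrite ?(linD lin_h, linN lin_h, linZ lin_h, lin0 lin_h,
  linD lin_d, linN lin_d, linZ lin_d, lin0 lin_d,
  linD lin_ep, linN lin_ep, linZ lin_ep, lin0 lin_ep,
  linD lin_em, linN lin_em, linZ lin_em, lin0 lin_em,
  linD lin_r, linN lin_r, linZ lin_r, lin0 lin_r,
  linD lin_l, linN lin_l, linZ lin_l, lin0 lin_l,
  linD lin_Q, linN lin_Q, linZ lin_Q, lin0 lin_Q,
  linD lin_W, linN lin_W, linZ lin_W, lin0 lin_W).

Lemma K1 w : Wo (h w) = h (Wo w) - Qo w - Po w.
Proof.
rewrite !WoU QoU PoU c2 c1; pushall; rewrite c3' c4'.
lcsolve6 (h (r (em w))) (h (l (ep w))) (ep (em w)) (em (ep w)) (r (l w)) (l (r w)).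
Qed.

Lemma K2 w : Qo (h w) = h (Qo w) - 2 *: Wo w + 4 *: h w.
Proof.
rewrite !WoU !QoU c2 c1; pushall; rewrite c1 c2 c5 c6.
lcsolve5 (h (ep (em w))) (h (em (ep w))) (r (em w)) (l (ep w)) (h w).
Qed.

Variable c : C.
Hypothesis hcas : forall v, - d (d v) + (1 / 2) *: (ep (em v) + em (ep v))
  + h (h v) - (1 / 2) *: (r (l v) + l (r v)) = c *: v.

Lemma Cas w : d w = 0 -> Po w = Qo w + 2 *: h (h w) - 2 *: (c *: w).
Proof.
move=> hw; rewrite -hcas hw (lin0 lin_d) PoU QoU.
lcsolve5 (ep (em w)) (em (ep w)) (h (h w)) (r (l w)) (l (r w)).
Qed.

Variable v0 : V.
Hypothesis hK : d v0 = 0 /\ x1 v0 = 0 /\ x2 v0 = 0.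

Lemma ep0 : ep v0 = 0.
Proof. by case: hK => _ [k1 k2]; rewrite epE k1 k2 scaler0 subr0. Qed.
Lemma em0 : em v0 = 0.
Proof. by case: hK => _ [k1 k2]; rewrite emE k1 k2 scaler0 subr0 oppr0. Qed.

Fact opZ_key : unit. Proof. exact: tt. Qed.
Definition opZ' := locked_with opZ_key (fun (k : nat) (v : V) =>
  (1 / 2) *: (r (em v) + l (ep v) - (2 * (k + 1))%:R *: h v)).
Lemma opZU k v : opZ' k v = (1 / 2) *: (r (em v) + l (ep v) - (2 * (k + 1))%:R *: h v).
Proof. by rewrite [opZ']unlock. Qed.
Fixpoint vs (n : nat) : V := match n with 0 => v0 | n'.+1 => opZ' n' (vs n') end.
Definition pv m := if m is m'.+1 then vs m' else 0.
Local Notation lam m := ((m%:R : C) * (m%:R + 1)).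
Local Notation gam m := ((m%:R : C) ^+ 2 * (m%:R ^+ 2 - 1 - c)).

Definition Inv m := d (vs m) = 0 /\ Qo (vs m) = (2 * lam m) *: vs m /\
  Wo (vs m) = (- (2 * m%:R)) *: h (vs m) + (2 * gam m) *: pv m.

Lemma vsS m : vs m.+1 = opZ' m (vs m). Proof. by []. Qed.
Lemma pvS m : pv m.+1 = vs m. Proof. by []. Qed.
Lemma pv0 : pv 0 = 0. Proof. by []. Qed.

Lemma Rec m : Inv m -> vs m.+1 = (- (2 * m%:R + 1)) *: h (vs m) + gam m *: pv m.
Proof.
case=> _ [_ hW]; rewrite vsS opZU -WoU.
rewrite hW.
lcsolve2 (h (vs m)) (pv m).
Qed.

Lemma Inv0 : Inv 0.
Proof.
split; first by case: hK.
rewrite QoU WoU ep0 em0 (lin0 lin_ep) (lin0 lin_em) (lin0 lin_r) (lin0 lin_l) ?pv0.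
split; lcsolve2 (vs 0) (h (vs 0)).
Qed.

Lemma stepDQ m : Inv m -> d (pv m) = 0 -> Qo (pv m) = (2 * lam m.-1) *: pv m ->
  d (vs m.+1) = 0 /\ Qo (vs m.+1) = (2 * lam m.+1) *: vs m.+1.
Proof.
move=> I hdu hQu; have Re := Rec I; case: I => hd [hQ hW].
rewrite Re; split.
  by pushall; rewrite b1 hd hdu ?(lin0 lin_h) ?scaler0 ?addr0.
pushall; rewrite K2 hQ hQu; pushall; rewrite hW.
case: m {Re hd hQ hW hdu hQu} => [|n]; [lcsolve2 (h (vs 0)) (pv 0) | lcsolve2 (h (vs n.+1)) (pv n.+1)].
Qed.

Lemma step0 : Inv 1.
Proof.
have I := Inv0; have [hd1 hQ1] := stepDQ I (lin0 lin_d) (ltac:(by rewrite /= (lin0 lin_Q) scaler0)).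
split => //; split => //.
have Re := Rec I; case: I => hd [hQ hW].
rewrite Re pvS; pushall; rewrite K1 (Cas hd) hQ hW pv0; pushall.
rewrite ?pv0 ?(lin0 lin_W) ?(lin0 lin_h) ?scaler0 ?addr0.
lcsolve2 (h (h (vs 0))) (vs 0).
Qed.

Lemma stepS n : Inv n -> Inv n.+1 -> Inv n.+2.
Proof.
move=> In In1.
have [hd2 hQ2] := stepDQ In1 (proj1 In) (proj1 (proj2 In)).
split => //; split => //.
have Re := Rec In1; have Re0 := Rec In.
case: In1 => hd [hQ hW]; case: In => hd0 [hQ0 hW0].
rewrite Re pvS; pushall; rewrite K1 (Cas hd) hQ hW pvS hW0; pushall.
set y := h (h (vs n.+1)).
rewrite ?pvS Re0.
pushall.
lcsolve4 y (h (h (vs n))) (h (vs n)) (pv n).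
Qed.
Lemma main m : vs m.+1 = (- (2 * m%:R + 1)) *: h (vs m) + gam m *: pv m.
Proof.
have : Inv m /\ Inv m.+1.
  elim: m => [|m [I1 I2]]; first by split; [exact: Inv0 | exact: step0].
  by split => //; exact: stepS.
by case=> I _; exact: Rec I.
Qed.
End Ops.


Lemma vs_vseq (R : realType) (V : lmodType R[i]) (M : unitary_g_module V) (v0 : V) n :
  vs M (elX1 R) (elX2 R) (elHt R) (elY1 R) (elY2 R) v0 n = vseq M v0 n.
Proof.
elim: n => [//|n IH] /=.
by rewrite opZU IH !rU !lU !emU !epU.
Qed.

Lemma pv_vprev (R : realType) (V : lmodType R[i]) (M : unitary_g_module V) (v0 : V) m :
  pv M (elX1 R) (elX2 R) (elHt R) (elY1 R) (elY2 R) v0 m = vprev2 M v0 m.+1.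
Proof. by case: m => [//|k] /=; rewrite vs_vseq. Qed.

Unset Implicit Arguments.
Set Strict Implicit.

Theorem theorem2p6 (R : realType) (s : R) (hs1 : 1 < s) (hs2 : s < 2)
    (V : lmodType R[i]) (M : unitary_g_module V)
    (hcas : forall v : V, casimir M v = rC (s * (s - 2)) *: v)
    (v0 : V) (hunit : inner M v0 v0 = 1) (hK : K_invariant M v0) :
  forall l : nat, (1 <= l)%N ->
    vseq M v0 l =
      ((1 - 2 * (l : int)) %:~R : R[i]) *: opHt M (vseq M v0 l.-1)
      + (rC (((l - 1) ^ 2)%:R * ((((l : int) * ((l : int) - 2)) %:~R) - s * (s - 2))))
          *: vprev2 M v0 l.
Proof.
case=> [//|m] _.
have hcas' : forall v : V,
  - act M (elD R) (act M (elD R) v) +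
  (1 / 2) *: (ep M (elX1 R) (elX2 R) (em M (elX1 R) (elX2 R) v)
             + em M (elX1 R) (elX2 R) (ep M (elX1 R) (elX2 R) v)) +
  act M (elHt R) (act M (elHt R) v) -
  (1 / 2) *: (r M (elY1 R) (elY2 R) (l M (elY1 R) (elY2 R) v)
             + l M (elY1 R) (elY2 R) (r M (elY1 R) (elY2 R) v)) =
  rC (s * (s - 2)) *: v.
  by move=> v; rewrite !rU !lU !emU !epU; exact: hcas v.
have := main (tr_D R) (tr_X1 R) (tr_X2 R) (tr_Ht R) (tr_Y1 R) (tr_Y2 R)
  (br_D_Ht R) (br_X1_Ht R) (br_X2_Ht R) (br_Ht_Y1 R) (br_Ht_Y2 R)
  (br_X1_Y1 R) (br_X1_Y2 R) (br_X2_Y1 R) (br_X2_Y2 R) hcas' hK m.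
rewrite !vs_vseq pv_vprev /= => ->.
rewrite /opHt subSS subn0.
congr (_ *: _ + _ *: _).
  by ring.
rewrite !rCE rmorphM rmorphB /=.
ring.
Qed.
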